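(* Let $z$ lie in the upper half-plane and let $E_4,\Delta_{24}$ and $h_n$ be as in the context. Then for every positive integer $n$, $$h_n(z)=2E_4(z)^n+\sum_{i=1}^{\lfloor n/3\rfloor}\frac{n}{i}\binom{n-i-1}{2i-1}2^{8i}\Delta_{24}(z)^iE_4(z)^{n-3i}.$$
   Context: For $z$ with $\mathrm{Im}(z)>0$ put $q=e^{\pi\sqrt{-1}z}$ and define $\vartheta_2(z)=\sum_{m\in\mathbb{Z}}q^{(m+1/2)^2}$, $\vartheta_3(z)=\sum_{m\in\mathbb{Z}}q^{m^2}$, $\vartheta_4(z)=\sum_{m\in\mathbb{Z}}(-q)^{m^2}$. Define $E_4(z)=\frac12(\vartheta_2(z)^8+\vartheta_3(z)^8+\vartheta_4(z)^8)$, $\Delta_{24}(z)=\left(\frac{\vartheta_2(z)\vartheta_3(z)\vartheta_4(z)}{2}\right)^8$, and for a nonnegative integer $n$, $h_n(z)=\vartheta_2(z)^{8n}+\vartheta_3(z)^{8n}+\vartheta_4(z)^{8n}$. *)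

(* Defs.v *)
From Stdlib Require Import Reals ZArith.
From Coquelicot Require Import Coquelicot.

Open Scope C_scope.

Definition cexp (w : C) : C :=
  (exp (Re w) * cos (Im w), exp (Re w) * sin (Im w))%R.

(* Sum of a complex series, taken componentwise (Coquelicot's [Series]
   is real-valued).  All series below converge absolutely. *)
Definition CSeries (a : nat -> C) : C :=
  (Series (fun k => Re (a k)), Series (fun k => Im (a k))).

Definition sumZ (f : Z -> C) : C :=
  CSeries (fun k => f (Z.of_nat k)) + CSeries (fun k => f (- Z.of_nat (S k))%Z).

(* q^r with q = e^{pi i z}, i.e. e^{pi i z r} for real r. *)
Definition qpow (z : C) (r : R) : C := cexp (RtoC PI * Ci * z * RtoC r).

Definition theta2 (z : C) : C :=
  sumZ (fun m => qpow z ((IZR m + /2) ^ 2)%R).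
Definition theta3 (z : C) : C :=
  sumZ (fun m => qpow z (IZR m ^ 2)%R).
(* (-q)^{m^2} = (-1)^{m^2} q^{m^2}  (m^2 is a nonnegative integer) *)
Definition theta4 (z : C) : C :=
  sumZ (fun m => RtoC ((-1) ^ Z.to_nat (m * m))%R * qpow z (IZR m ^ 2)%R).

Definition E4 (z : C) : C :=
  RtoC (/2) * (pow_n (theta2 z) 8 + pow_n (theta3 z) 8 + pow_n (theta4 z) 8).

Definition Delta24 (z : C) : C :=
  pow_n (theta2 z * theta3 z * theta4 z / RtoC 2) 8.

Definition h (n : nat) (z : C) : C :=
  pow_n (theta2 z) (8 * n) + pow_n (theta3 z) (8 * n) + pow_n (theta4 z) (8 * n).

(* Main.v *)
Require Import Defs.
From Stdlib Require Import Reals ZArith List Lia Bool Psatz Lra.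
From Coquelicot Require Import Coquelicot.
Import ListNotations.
Set Bullet Behavior "Strict Subproofs".

Lemma NoDup_map_inj {A B} (f : A -> B) (l : list A) :
  (forall x y, In x l -> In y l -> f x = f y -> x = y) -> NoDup l -> NoDup (map f l).
Proof.
  induction l as [|a l IH]; intros Hi Hn; simpl; constructor.
  - intros Hin. apply in_map_iff in Hin as [y [Hy Hy']].
    inversion Hn; subst. assert (y = a) by (apply Hi; simpl; auto). subst; contradiction.
  - apply IH. intros; apply Hi; simpl; auto. inversion Hn; auto.
Qed.

Lemma NoDup_prod {A B} (l1 : list A) (l2 : list B) :
  NoDup l1 -> NoDup l2 -> NoDup (list_prod l1 l2).
Proof.
  induction l1 as [|a l1 IH]; intros H1 H2; simpl; [constructor|].
  inversion H1; subst.
  apply NoDup_app.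
  - apply NoDup_map_inj; auto. intros x y _ _ E; inversion E; auto.
  - apply IH; auto.
  - intros [x y] Hin Hin2. apply in_map_iff in Hin as [b [Eb _]]. inversion Eb; subst.
    apply in_prod_iff in Hin2 as [Ha _]. contradiction.
Qed.

Lemma count_le {A B} (la : list A) (lb : list B) (P : A -> bool) (Q : B -> bool)
  (f : A -> B) (g : B -> A) :
  NoDup la -> NoDup lb ->
  (forall a, In a la -> P a = true -> In (f a) lb /\ Q (f a) = true /\ g (f a) = a) ->
  (length (filter P la) <= length (filter Q lb))%nat.
Proof.
  intros Ha Hb H.
  rewrite <- (length_map f).
  apply NoDup_incl_length.
  - apply NoDup_map_inj; [|apply NoDup_filter; auto].
    intros x y Hx Hy E. apply filter_In in Hx as [Hx1 Hx2]. apply filter_In in Hy as [Hy1 Hy2].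
    destruct (H x Hx1 Hx2) as [_ [_ Ex]]. destruct (H y Hy1 Hy2) as [_ [_ Ey]].
    rewrite <- Ex, <- Ey, E; auto.
  - intros y Hy. apply in_map_iff in Hy as [x [Ex Hx]]. subst.
    apply filter_In in Hx as [Hx1 Hx2]. destruct (H x Hx1 Hx2) as [? [? _]].
    apply filter_In; auto.
Qed.

Lemma count_bij {A B} (la : list A) (lb : list B) (P : A -> bool) (Q : B -> bool)
  (f : A -> B) (g : B -> A) :
  NoDup la -> NoDup lb ->
  (forall a, In a la -> P a = true -> In (f a) lb /\ Q (f a) = true /\ g (f a) = a) ->
  (forall b, In b lb -> Q b = true -> In (g b) la /\ P (g b) = true /\ f (g b) = b) ->
  length (filter P la) = length (filter Q lb).
Proof.
  intros. apply Nat.le_antisymm; [eapply count_le | eapply count_le]; eauto.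
Qed.

Lemma count_split {A} (l : list A) (P Q : A -> bool) :
  length (filter P l) = (length (filter (fun x => P x && Q x) l) + length (filter (fun x => P x && negb (Q x)) l))%nat.
Proof.
  induction l as [|a l IH]; simpl; auto.
  destruct (P a), (Q a); simpl; lia.
Qed.

Lemma count_zero {A} (l : list A) (P : A -> bool) :
  (forall x, P x = false) -> length (filter P l) = 0%nat.
Proof. intros H; induction l; simpl; auto. rewrite H; auto. Qed.

Open Scope Z_scope.

Definition V4 := (Z * Z * Z * Z)%type.
Definition nz (v : V4) : Z := let '(a, b, c, d) := v in a*a + b*b + c*c + d*d.
Definition n2z (v : V4) : Z :=
  let '(a, b, c, d) := v in a*(a+1) + b*(b+1) + c*(c+1) + d*(d+1) + 1.

Definition IL (K : nat) : list Z :=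
  map Z.of_nat (seq 0 (S K)) ++ map (fun k => - Z.of_nat (S k)) (seq 0 (S K)).

Lemma IL_In K m : In m (IL K) <-> - Z.of_nat K - 1 <= m <= Z.of_nat K.
Proof.
  unfold IL. rewrite in_app_iff, !in_map_iff. split.
  - intros [[k [E H]]|[k [E H]]]; apply in_seq in H; subst; lia.
  - intros H. destruct (Z_le_gt_dec 0 m).
    + left. exists (Z.to_nat m). split; [lia|]. apply in_seq; lia.
    + right. exists (Z.to_nat (- m - 1)). split; [lia|]. apply in_seq; lia.
Qed.

Lemma IL_NoDup K : NoDup (IL K).
Proof.
  unfold IL. apply NoDup_app.
  - apply NoDup_map_inj; [intros; lia| apply seq_NoDup].
  - apply NoDup_map_inj; [intros; lia| apply seq_NoDup].
  - intros a H1 H2. apply in_map_iff in H1 as [k [E _]]. apply in_map_iff in H2 as [j [E' _]]. lia.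
Qed.

Definition box4 (l : list Z) : list V4 := list_prod (list_prod (list_prod l l) l) l.

Lemma box4_In l a b c d : In (a, b, c, d) (box4 l) <-> In a l /\ In b l /\ In c l /\ In d l.
Proof. unfold box4. rewrite !in_prod_iff. tauto. Qed.

Lemma box4_NoDup l : NoDup l -> NoDup (box4 l).
Proof. intros; unfold box4; repeat apply NoDup_prod; auto. Qed.

Lemma box4_IL K a b c d : In (a, b, c, d) (box4 (IL K)) <->
  (- Z.of_nat K - 1 <= a <= Z.of_nat K /\ - Z.of_nat K - 1 <= b <= Z.of_nat K /\
   - Z.of_nat K - 1 <= c <= Z.of_nat K /\ - Z.of_nat K - 1 <= d <= Z.of_nat K).
Proof. rewrite box4_In, !IL_In. tauto. Qed.

Lemma sq_bound x M : 0 <= M -> x * x <= M * M -> - M <= x <= M.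
Proof. intros. nia. Qed.

Lemma sq_bound2 x T : x * x <= T -> - T <= x <= T.
Proof. intros. nia. Qed.

Definition oddall (w : V4) : bool :=
  let '(a, b, c, d) := w in Z.odd a && Z.odd b && Z.odd c && Z.odd d.

Definition Xc (w : V4) : bool :=
  let '(a, b, c, d) := w in Bool.eqb (Z.odd ((a + b) / 2)) (Z.odd ((c + d) / 2)).

Definition FX (v : V4) : V4 :=
  let '(a, b, c, d) := v in (a+b+c+d, a+b-c-d, a-b+c-d, a-b-c+d).
Definition GX (w : V4) : V4 :=
  let '(w1, w2, w3, w4) := w in
  let p := (w1 + w2) / 2 in let q := (w1 - w2) / 2 in
  let r := (w3 + w4) / 2 in let s := (w3 - w4) / 2 in
  ((p + r) / 2, (p - r) / 2, (q + s) / 2, (q - s) / 2).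
(* phi o swap24 o phi *)
Definition FY (v : V4) : V4 :=
  let '(a, b, c, d) := v in (a+b+c-d, a+b-c+d, a-b+c+d, -a+b+c+d).
Definition GY (w : V4) : V4 :=
  let '(w1, w2, w3, w4) := w in
  let p := (w1 + w2) / 2 in let q := (w1 - w2) / 2 in
  let r := (w3 + w4) / 2 in let s := (w3 - w4) / 2 in
  ((p + s) / 2, (p - s) / 2, (r + q) / 2, (r - q) / 2).
Definition D1 (v : V4) : V4 :=
  let '(a, b, c, d) := v in (2*a+1, 2*b+1, 2*c+1, 2*d+1).
Definition H1 (w : V4) : V4 :=
  let '(a, b, c, d) := w in ((a-1)/2, (b-1)/2, (c-1)/2, (d-1)/2).

Lemma odd_ex x : Z.odd x = true -> exists k, x = 2 * k + 1.
Proof. intros H. apply Z.odd_spec in H as [k Hk]. exists k; lia. Qed.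
Lemma even_ex x : Z.odd x = false -> exists k, x = 2 * k.
Proof. intros H. assert (Z.even x = true) by (rewrite <- Z.negb_odd, H; auto).
  apply Z.even_spec in H0 as [k Hk]. exists k; lia. Qed.

Lemma odd_sq x : Z.odd (x * x) = Z.odd x.
Proof. rewrite Z.odd_mul. destruct (Z.odd x); auto. Qed.

Lemma nz_odd a b c d : Z.odd (nz (a, b, c, d)) = Z.odd (a + b + c + d).
Proof. simpl. rewrite !Z.odd_add, !odd_sq. reflexivity. Qed.

Lemma n2z_odd v : Z.odd (n2z v) = true.
Proof.
  destruct v as [[[a b] c] d]. simpl.
  rewrite !Z.odd_add, !Z.odd_mul, !Z.odd_add. simpl.
  destruct (Z.odd a), (Z.odd b), (Z.odd c), (Z.odd d); reflexivity.
Qed.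

Ltac dl := Z.to_euclidean_division_equations; lia.

Open Scope Z_scope.

Lemma odd2k1 k : Z.odd (2 * k + 1) = true.
Proof. rewrite Z.add_comm, Z.odd_add_mul_2. reflexivity. Qed.

Lemma prod_bound x M : 0 <= M -> x * (x + 1) <= M * M - 1 -> - M <= x <= M - 1.
Proof. intros. nia. Qed.

Lemma countD (M N : nat) : (N <= M * M)%nat ->
  length (filter (fun v => n2z v =? Z.of_nat N) (box4 (IL M))) =
  length (filter (fun w => (nz w =? 4 * Z.of_nat N) && oddall w) (box4 (IL (4 * N)))).
Proof.
  intros HN.
  apply count_bij with (f := D1) (g := H1); try apply box4_NoDup, IL_NoDup.
  - intros [[[a b] c] d] Hin HP. apply Z.eqb_eq in HP. simpl in HP. cbv [D1 H1 nz oddall].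
    assert (Hn : (2*a+1)*(2*a+1) + (2*b+1)*(2*b+1) + (2*c+1)*(2*c+1) + (2*d+1)*(2*d+1) = 4 * Z.of_nat N) by nia.
    split; [|split].
    + apply box4_IL. rewrite Nat2Z.inj_mul.
      assert (0 <= (2*a+1)*(2*a+1)) by nia. assert (0 <= (2*b+1)*(2*b+1)) by nia.
      assert (0 <= (2*c+1)*(2*c+1)) by nia. assert (0 <= (2*d+1)*(2*d+1)) by nia.
      pose proof (sq_bound2 (2*a+1) (4 * Z.of_nat N)).
      pose proof (sq_bound2 (2*b+1) (4 * Z.of_nat N)).
      pose proof (sq_bound2 (2*c+1) (4 * Z.of_nat N)).
      pose proof (sq_bound2 (2*d+1) (4 * Z.of_nat N)).
      lia.
    + rewrite Hn, Z.eqb_refl, !odd2k1. reflexivity.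
    + f_equal; [f_equal; [f_equal|]|]; symmetry; apply Z.div_unique_exact; lia.
  - intros [[[a b] c] d] Hin HQ. cbv [nz oddall] in HQ.
    apply andb_prop in HQ as [HQ1 HQ2]. apply Z.eqb_eq in HQ1.
    apply andb_prop in HQ2 as [HQ2 O4]. apply andb_prop in HQ2 as [HQ2 O3].
    apply andb_prop in HQ2 as [O1 O2].
    destruct (odd_ex _ O1) as [k1 ->]. destruct (odd_ex _ O2) as [k2 ->].
    destruct (odd_ex _ O3) as [k3 ->]. destruct (odd_ex _ O4) as [k4 ->].
    cbv [D1 H1 n2z].
    replace ((2 * k1 + 1 - 1) / 2) with k1 by dl.
    replace ((2 * k2 + 1 - 1) / 2) with k2 by dl.
    replace ((2 * k3 + 1 - 1) / 2) with k3 by dl.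
    replace ((2 * k4 + 1 - 1) / 2) with k4 by dl.
    assert (Hn : k1*(k1+1) + k2*(k2+1) + k3*(k3+1) + k4*(k4+1) + 1 = Z.of_nat N) by nia.
    assert (HM : Z.of_nat N <= Z.of_nat M * Z.of_nat M) by (rewrite <- Nat2Z.inj_mul; lia).
    assert (0 <= k1*(k1+1)) by nia. assert (0 <= k2*(k2+1)) by nia.
    assert (0 <= k3*(k3+1)) by nia. assert (0 <= k4*(k4+1)) by nia.
    split; [|split].
    + apply box4_IL. repeat split;
      match goal with |- context [?k] => idtac end;
      (assert (- Z.of_nat M <= k1 <= Z.of_nat M - 1) by (apply prod_bound; lia);
       assert (- Z.of_nat M <= k2 <= Z.of_nat M - 1) by (apply prod_bound; lia);
       assert (- Z.of_nat M <= k3 <= Z.of_nat M - 1) by (apply prod_bound; lia);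
       assert (- Z.of_nat M <= k4 <= Z.of_nat M - 1) by (apply prod_bound; lia); lia).
    + rewrite Hn. apply Z.eqb_refl.
    + reflexivity.
Qed.

Open Scope Z_scope.

Lemma odd_shift x y : Z.odd (x + 2 * y) = Z.odd x.
Proof. apply Z.odd_add_mul_2. Qed.

Lemma nzFX v : nz (FX v) = 4 * nz v.
Proof. destruct v as [[[a b] c] d]. cbv [nz FX FY]. ring. Qed.
Lemma nzFY v : nz (FY v) = 4 * nz v.
Proof. destruct v as [[[a b] c] d]. cbv [nz FX FY]. ring. Qed.

Lemma in_box_of_nz K M v : 0 <= M -> nz v = K -> K <= M * M ->
  In v (box4 (IL (Z.to_nat M))).
Proof.
  destruct v as [[[a b] c] d]. simpl. intros HM HK HKM. apply box4_IL.
  assert (0 <= a*a) by nia. assert (0 <= b*b) by nia. assert (0 <= c*c) by nia. assert (0 <= d*d) by nia.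
  pose proof (sq_bound a M HM). pose proof (sq_bound b M HM).
  pose proof (sq_bound c M HM). pose proof (sq_bound d M HM). lia.
Qed.

Lemma in_box_of_nz2 K v : nz v = K -> In v (box4 (IL (Z.to_nat K))).
Proof.
  destruct v as [[[a b] c] d]. simpl. intros HK. apply box4_IL.
  assert (0 <= a*a) by nia. assert (0 <= b*b) by nia. assert (0 <= c*c) by nia. assert (0 <= d*d) by nia.
  pose proof (sq_bound2 a K). pose proof (sq_bound2 b K).
  pose proof (sq_bound2 c K). pose proof (sq_bound2 d K). lia.
Qed.

Lemma countX (M N : nat) : Z.odd (Z.of_nat N) = true -> (N <= M * M)%nat ->
  length (filter (fun v => nz v =? Z.of_nat N) (box4 (IL M))) =
  length (filter (fun w => ((nz w =? 4 * Z.of_nat N) && oddall w) && Xc w) (box4 (IL (4 * N)))).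
Proof.
  intros HNo HN.
  assert (HM : Z.of_nat N <= Z.of_nat M * Z.of_nat M) by (rewrite <- Nat2Z.inj_mul; lia).
  apply count_bij with (f := FX) (g := GX); try apply box4_NoDup, IL_NoDup.
  - intros [[[a b] c] d] Hin HP. apply Z.eqb_eq in HP.
    assert (Hs : Z.odd (a + b + c + d) = true) by (rewrite <- nz_odd, HP; auto).
    destruct (odd_ex _ Hs) as [s Hs'].
    split; [|split].
    + replace (4 * N)%nat with (Z.to_nat (4 * Z.of_nat N)) by lia.
      apply in_box_of_nz2. rewrite nzFX, HP. reflexivity.
    + rewrite nzFX, HP, Z.eqb_refl. cbv [oddall Xc FX FY].
      replace (a+b+c+d) with (2*s+1) by lia.
      replace (a+b-c-d) with (2*(s-c-d)+1) by lia.
      replace (a-b+c-d) with (2*(s-b-d)+1) by lia.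
      replace (a-b-c+d) with (2*(s-b-c)+1) by lia.
      rewrite !odd2k1. cbn [andb].
      replace ((2 * s + 1 + (2 * (s - c - d) + 1)) / 2) with (a + b) by dl.
      replace ((2 * (s - b - d) + 1 + (2 * (s - b - c) + 1)) / 2) with ((a + b) + 2 * (-b)) by dl.
      rewrite odd_shift. apply eqb_reflx.
    + simpl. f_equal; [f_equal; [f_equal|]|]; dl.
  - intros [[[w1 w2] w3] w4] Hin HQ. cbv [nz oddall Xc] in HQ.
    apply andb_prop in HQ as [HQ HX]. apply andb_prop in HQ as [HQ1 HQ2]. apply Z.eqb_eq in HQ1.
    apply andb_prop in HQ2 as [HQ2 O4]. apply andb_prop in HQ2 as [HQ2 O3].
    apply andb_prop in HQ2 as [O1 O2].
    destruct (odd_ex _ O1) as [k1 ->]. destruct (odd_ex _ O2) as [k2 ->].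
    destruct (odd_ex _ O3) as [k3 ->]. destruct (odd_ex _ O4) as [k4 ->].
    replace ((2 * k1 + 1 + (2 * k2 + 1)) / 2) with (k1 + k2 + 1) in HX by dl.
    replace ((2 * k3 + 1 + (2 * k4 + 1)) / 2) with (k3 + k4 + 1) in HX by dl.
    assert (HE : Z.odd ((k1 + k2 + 1) + 2 * (- k3 - k4 - 1)) = Z.odd (k3 + k4 + 1)).
    { rewrite odd_shift. apply eqb_prop in HX. auto. }
    assert (HE2 : Z.odd ((k3 + k4 + 1) + (k1 + k2 + 1 + 2 * (- k3 - k4 - 1))) = false).
    { rewrite Z.odd_add, HE. destruct (Z.odd (k3 + k4 + 1)); auto. }
    destruct (even_ex _ HE2) as [j Hj].
    assert (HF : FX (GX (2 * k1 + 1, 2 * k2 + 1, 2 * k3 + 1, 2 * k4 + 1)) =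
                 (2 * k1 + 1, 2 * k2 + 1, 2 * k3 + 1, 2 * k4 + 1)).
    { cbv [FX GX FY GY]. f_equal; [f_equal; [f_equal|]|]; dl. }
    assert (Hnz : nz (GX (2 * k1 + 1, 2 * k2 + 1, 2 * k3 + 1, 2 * k4 + 1)) = Z.of_nat N).
    { pose proof (nzFX (GX (2 * k1 + 1, 2 * k2 + 1, 2 * k3 + 1, 2 * k4 + 1))) as E.
      rewrite HF in E.
      assert (Hw : nz (2 * k1 + 1, 2 * k2 + 1, 2 * k3 + 1, 2 * k4 + 1) = 4 * Z.of_nat N) by (cbv [nz]; lia).
      lia. }
    split; [|split]; auto.
    + replace M with (Z.to_nat (Z.of_nat M)) by lia. eapply in_box_of_nz; eauto; lia.
    + rewrite Hnz. apply Z.eqb_refl.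
Qed.

Lemma countY (M N : nat) : Z.odd (Z.of_nat N) = true -> (N <= M * M)%nat ->
  length (filter (fun v => nz v =? Z.of_nat N) (box4 (IL M))) =
  length (filter (fun w => ((nz w =? 4 * Z.of_nat N) && oddall w) && negb (Xc w)) (box4 (IL (4 * N)))).
Proof.
  intros HNo HN.
  assert (HM : Z.of_nat N <= Z.of_nat M * Z.of_nat M) by (rewrite <- Nat2Z.inj_mul; lia).
  apply count_bij with (f := FY) (g := GY); try apply box4_NoDup, IL_NoDup.
  - intros [[[a b] c] d] Hin HP. apply Z.eqb_eq in HP.
    assert (Hs : Z.odd (a + b + c + d) = true) by (rewrite <- nz_odd, HP; auto).
    destruct (odd_ex _ Hs) as [s Hs'].
    split; [|split].
    + replace (4 * N)%nat with (Z.to_nat (4 * Z.of_nat N)) by lia.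
      apply in_box_of_nz2. rewrite nzFY, HP. reflexivity.
    + rewrite nzFY, HP, Z.eqb_refl. cbv [oddall Xc FX FY].
      replace (a+b+c-d) with (2*(s-d)+1) by lia.
      replace (a+b-c+d) with (2*(s-c)+1) by lia.
      replace (a-b+c+d) with (2*(s-b)+1) by lia.
      replace (-a+b+c+d) with (2*(s-a)+1) by lia.
      rewrite !odd2k1. cbn [andb].
      replace ((2 * (s - d) + 1 + (2 * (s - c) + 1)) / 2) with (a + b) by dl.
      replace ((2 * (s - b) + 1 + (2 * (s - a) + 1)) / 2) with (c + d) by dl.
      replace (c + d) with ((1 - (a + b)) + 2 * s) by lia.
      rewrite odd_shift. rewrite Z.odd_sub. simpl. destruct (Z.odd (a + b)); reflexivity.
    + simpl. f_equal; [f_equal; [f_equal|]|]; dl.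
  - intros [[[w1 w2] w3] w4] Hin HQ. cbv [nz oddall Xc] in HQ.
    apply andb_prop in HQ as [HQ HX]. apply andb_prop in HQ as [HQ1 HQ2]. apply Z.eqb_eq in HQ1.
    apply andb_prop in HQ2 as [HQ2 O4]. apply andb_prop in HQ2 as [HQ2 O3].
    apply andb_prop in HQ2 as [O1 O2].
    destruct (odd_ex _ O1) as [k1 ->]. destruct (odd_ex _ O2) as [k2 ->].
    destruct (odd_ex _ O3) as [k3 ->]. destruct (odd_ex _ O4) as [k4 ->].
    replace ((2 * k1 + 1 + (2 * k2 + 1)) / 2) with (k1 + k2 + 1) in HX by dl.
    replace ((2 * k3 + 1 + (2 * k4 + 1)) / 2) with (k3 + k4 + 1) in HX by dl.
    assert (HE2 : Z.odd ((k1 + k2 + 1) + (k3 + k4 + 1)) = true).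
    { rewrite Z.odd_add. destruct (Z.odd (k1 + k2 + 1)), (Z.odd (k3 + k4 + 1)); auto. }
    destruct (odd_ex _ HE2) as [j Hj].
    assert (HF : FY (GY (2 * k1 + 1, 2 * k2 + 1, 2 * k3 + 1, 2 * k4 + 1)) =
                 (2 * k1 + 1, 2 * k2 + 1, 2 * k3 + 1, 2 * k4 + 1)).
    { cbv [FX GX FY GY]. f_equal; [f_equal; [f_equal|]|]; dl. }
    assert (Hnz : nz (GY (2 * k1 + 1, 2 * k2 + 1, 2 * k3 + 1, 2 * k4 + 1)) = Z.of_nat N).
    { pose proof (nzFY (GY (2 * k1 + 1, 2 * k2 + 1, 2 * k3 + 1, 2 * k4 + 1))) as E.
      rewrite HF in E.
      assert (Hw : nz (2 * k1 + 1, 2 * k2 + 1, 2 * k3 + 1, 2 * k4 + 1) = 4 * Z.of_nat N) by (cbv [nz]; lia).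
      lia. }
    split; [|split]; auto.
    + replace M with (Z.to_nat (Z.of_nat M)) by lia. eapply in_box_of_nz; eauto; lia.
    + rewrite Hnz. apply Z.eqb_refl.
Qed.

Lemma count_main (M N : nat) : (N <= M * M)%nat ->
  Z.odd (Z.of_nat N) = true ->
  length (filter (fun v => n2z v =? Z.of_nat N) (box4 (IL M))) =
  Nat.mul 2 (length (filter (fun v => nz v =? Z.of_nat N) (box4 (IL M)))).
Proof.
  intros HN Ho. rewrite countD by auto.
  rewrite (count_split (box4 (IL (4 * N)%nat)) (fun w => (nz w =? 4 * Z.of_nat N) && oddall w) Xc). rewrite <- (countX M N), <- (countY M N) by auto. lia.
Qed.

Lemma count_even (M N : nat) : Z.odd (Z.of_nat N) = false ->
  length (filter (fun v => n2z v =? Z.of_nat N) (box4 (IL M))) = 0%nat.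
Proof.
  intros Ho. apply count_zero. intros v. apply Z.eqb_neq. intros E.
  pose proof (n2z_odd v). rewrite E in H. congruence.
Qed.

Close Scope Z_scope.
Open Scope C_scope.

Definition lsum {A} (l : list A) (f : A -> C) : C := fold_right (fun x acc => f x + acc) 0 l.

Lemma lsum_app {A} (l1 l2 : list A) f : lsum (l1 ++ l2) f = lsum l1 f + lsum l2 f.
Proof. induction l1; simpl. ring. rewrite IHl1. ring. Qed.

Lemma lsum_map {A B} (g : A -> B) l f : lsum (map g l) f = lsum l (fun x => f (g x)).
Proof. induction l; simpl; auto. rewrite IHl; auto. Qed.

Lemma lsum_ext {A} (l : list A) f g : (forall x, In x l -> f x = g x) -> lsum l f = lsum l g.
Proof. induction l; simpl; intros H; auto. rewrite H, IHl; auto. Qed.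

Lemma lsum_scal {A} (l : list A) c f : lsum l (fun x => c * f x) = c * lsum l f.
Proof. induction l; simpl. ring. rewrite IHl. ring. Qed.

Lemma lsum_plus {A} (l : list A) f g : lsum l (fun x => f x + g x) = lsum l f + lsum l g.
Proof. induction l; simpl. ring. rewrite IHl. ring. Qed.

Lemma lsum_opp {A} (l : list A) f : lsum l (fun x => - f x) = - lsum l f.
Proof. induction l; simpl. ring. rewrite IHl. ring. Qed.

Lemma lsum_prod {A B} (l1 : list A) (l2 : list B) f g :
  lsum (list_prod l1 l2) (fun p => f (fst p) * g (snd p)) = lsum l1 f * lsum l2 g.
Proof.
  induction l1; simpl. ring.
  rewrite lsum_app, lsum_map, IHl1. simpl. rewrite lsum_scal. ring.
Qed.

Lemma lsum_filter {A} (l : list A) (P : A -> bool) f :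
  lsum l f = lsum (filter P l) f + lsum (filter (fun x => negb (P x)) l) f.
Proof. induction l; simpl. ring. destruct (P a); simpl; rewrite IHl; ring. Qed.

Lemma lsum_bound {A} (l : list A) f B : (forall x, In x l -> Cmod (f x) <= B)%R ->
  (Cmod (lsum l f) <= INR (length l) * B)%R.
Proof.
  induction l; intros H.
  - simpl. rewrite Cmod_0. lra.
  - change (lsum (a :: l) f) with (f a + lsum l f). change (length (a :: l)) with (S (length l)).
    eapply Rle_trans. apply Cmod_triangle. rewrite S_INR.
    assert (forall x, In x l -> Cmod (f x) <= B)%R by (intros; apply H; simpl; auto).
    assert (Cmod (f a) <= B)%R by (apply H; simpl; auto). assert (Cmod (lsum l f) <= INR (length l) * B)%R by auto. lra.
Qed.

Lemma lsum_cons {A} x (l : list A) f : lsum (x :: l) f = f x + lsum l f.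
Proof. reflexivity. Qed.

Lemma lsum_zero {A} (l : list A) (f : A -> C) : (forall x, f x = 0) -> lsum l f = 0.
Proof. intros H; induction l; simpl; auto. rewrite H, IHl. ring. Qed.

Lemma lsum_delta (s : list nat) (a : nat) (G : nat -> C) : NoDup s ->
  lsum s (fun N => if Nat.eqb a N then G N else 0) = if in_dec Nat.eq_dec a s then G a else 0.
Proof.
  induction s as [|b s IH]; simpl; intros Hn; auto.
  inversion Hn; subst. rewrite IH by auto.
  destruct (Nat.eqb_spec a b); subst.
  - destruct (Nat.eq_dec b b); [|congruence]. destruct (in_dec Nat.eq_dec b s); [contradiction|]. ring.
  - destruct (Nat.eq_dec b a); [congruence|]. destruct (in_dec Nat.eq_dec a s); ring.
Qed.

Lemma lsum_group {A} (l : list A) (k : A -> nat) (K : nat) (G : nat -> C) :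
  lsum (filter (fun v => Nat.leb (k v) K) l) (fun v => G (k v)) =
  lsum (seq 0 (S K)) (fun N => RtoC (INR (length (filter (fun v => Nat.eqb (k v) N) l))) * G N).
Proof.
  induction l as [|x l IH]; cbn [filter].
  - transitivity (RtoC 0); [reflexivity|]. symmetry. apply lsum_zero. intros N. cbn [length INR]. unfold RtoC. apply injective_projections; simpl; ring.
  - transitivity ((if Nat.leb (k x) K then G (k x) else 0) +
       lsum (seq 0 (S K)) (fun N => RtoC (INR (length (filter (fun v => Nat.eqb (k v) N) l))) * G N)).
    { destruct (Nat.leb (k x) K); [rewrite lsum_cons|]; rewrite IH; ring. }
    transitivity (lsum (seq 0 (S K)) (fun N => if Nat.eqb (k x) N then G N else 0) +
       lsum (seq 0 (S K)) (fun N => RtoC (INR (length (filter (fun v => Nat.eqb (k v) N) l))) * G N)).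
    { rewrite lsum_delta by apply seq_NoDup. f_equal.
      destruct (Nat.leb_spec (k x) K); destruct (in_dec Nat.eq_dec (k x) (seq 0 (S K))) as [Hi|Hi];
        auto; apply in_seq in Hi || (exfalso; apply Hi; apply in_seq); lia. }
    rewrite <- lsum_plus. apply lsum_ext. intros N _.
    destruct (Nat.eqb (k x) N); cbn [length]; [|ring].
    rewrite S_INR. unfold RtoC. apply injective_projections; simpl; ring.
Qed.

Open Scope C_scope.

Lemma exp_le' x y : (x <= y)%R -> (exp x <= exp y)%R.
Proof. intros [H|H]. left; apply exp_increasing; auto. subst; lra. Qed.

Lemma exp_INR k x : exp (INR k * x) = (exp x ^ k)%R.
Proof.
  induction k. simpl. rewrite Rmult_0_l, exp_0; auto.
  rewrite S_INR, Rmult_plus_distr_r, exp_plus, IHk, Rmult_1_l. simpl. ring.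
Qed.

Lemma cexp_add a b : cexp (a + b) = cexp a * cexp b.
Proof.
  destruct a as [a1 a2], b as [b1 b2]. unfold cexp, Cmult, Cplus; simpl.
  rewrite exp_plus, cos_plus, sin_plus. apply injective_projections; simpl; ring.
Qed.

Lemma Cmod_cexp w : Cmod (cexp w) = exp (Re w).
Proof.
  unfold Cmod, cexp; simpl.
  replace (exp (Re w) * cos (Im w) * (exp (Re w) * cos (Im w) * 1) +
     exp (Re w) * sin (Im w) * (exp (Re w) * sin (Im w) * 1))%R
    with (Rsqr (exp (Re w)) * (Rsqr (sin (Im w)) + Rsqr (cos (Im w))))%R by (unfold Rsqr; ring).
  rewrite sin2_cos2, Rmult_1_r. apply sqrt_Rsqr. left; apply exp_pos.
Qed.

Lemma qpow_add z r s : qpow z (r + s) = qpow z r * qpow z s.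
Proof.
  unfold qpow. rewrite <- cexp_add. f_equal.
  destruct z as [x y]. unfold RtoC, Ci, Cmult, Cplus; simpl.
  apply injective_projections; simpl; ring.
Qed.

Lemma Cmod_qpow z r : Cmod (qpow z r) = exp (- (PI * Im z) * r).
Proof.
  unfold qpow. rewrite Cmod_cexp. f_equal.
  destruct z as [x y]. unfold RtoC, Ci, Cmult; simpl. ring.
Qed.

Definition rho (z : C) : R := exp (- (PI * Im z)).

Lemma rho_pos z : (0 < rho z)%R.
Proof. apply exp_pos. Qed.

Lemma rho_lt1 z : (0 < Im z)%R -> (rho z < 1)%R.
Proof.
  intros H. unfold rho. rewrite <- exp_0. apply exp_increasing.
  pose proof PI_RGT_0. nra.
Qed.

Lemma qpow_bound z r k : (0 < Im z)%R -> (INR k <= r)%R -> (Cmod (qpow z r) <= rho z ^ k)%R.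
Proof.
  intros Hz Hk. rewrite Cmod_qpow. unfold rho. rewrite <- exp_INR.
  apply exp_le'. pose proof PI_RGT_0. assert (0 < PI * Im z)%R by (apply Rmult_lt_0_compat; lra). nra.
Qed.

Definition Clim (u : nat -> C) (a : C) := is_lim_seq (fun n => Cmod (u n - a)) 0%R.

Lemma Clim_squeeze u a (b : nat -> R) : (forall n, Cmod (u n - a) <= b n)%R ->
  is_lim_seq b 0%R -> Clim u a.
Proof.
  intros H Hb. unfold Clim. apply is_lim_seq_le_le with (u := fun _ => 0%R) (w := b); auto.
  intros n; split; auto. apply Cmod_ge_0. apply is_lim_seq_const.
Qed.

Lemma Clim_plus u v a b : Clim u a -> Clim v b -> Clim (fun n => u n + v n) (a + b).
Proof.
  intros Hu Hv. apply Clim_squeeze with (b := fun n => (Cmod (u n - a) + Cmod (v n - b))%R).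
  - intros n. replace (u n + v n - (a + b)) with ((u n - a) + (v n - b)) by ring. apply Cmod_triangle.
  - replace 0%R with (0 + 0)%R by ring. apply is_lim_seq_plus'; auto.
Qed.

Lemma Clim_opp u a : Clim u a -> Clim (fun n => - u n) (- a).
Proof.
  intros Hu. apply Clim_squeeze with (b := fun n => Cmod (u n - a)); auto.
  intros n. replace (- u n - - a) with (- (u n - a)) by ring.
  rewrite Cmod_opp. lra.
Qed.

Lemma Clim_mult u v a b : Clim u a -> Clim v b -> Clim (fun n => u n * v n) (a * b).
Proof.
  intros Hu Hv.
  apply Clim_squeeze with (b := fun n => (Cmod (u n - a) * Cmod (v n - b) + Cmod a * Cmod (v n - b) + Cmod b * Cmod (u n - a))%R).
  - intros n. replace (u n * v n - a * b) with ((u n - a) * (v n - b) + a * (v n - b) + b * (u n - a)) by ring.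
    eapply Rle_trans. apply Cmod_triangle. rewrite Cmod_mult.
    eapply Rle_trans. apply Rplus_le_compat_r. apply Cmod_triangle. rewrite !Cmod_mult. lra.
  - replace 0%R with (0 * 0 + Cmod a * 0 + Cmod b * 0)%R by ring.
    apply is_lim_seq_plus'; [apply is_lim_seq_plus'|].
    + apply is_lim_seq_mult'; auto.
    + apply is_lim_seq_mult'; auto. apply is_lim_seq_const.
    + apply is_lim_seq_mult'; auto. apply is_lim_seq_const.
Qed.

Lemma Clim_unique u a b : Clim u a -> Clim u b -> a = b.
Proof.
  intros Ha Hb.
  assert (H : Rbar_le (Cmod (a - b)) 0%R).
  { apply is_lim_seq_le with (u := fun _ => Cmod (a - b)) (v := fun n => (Cmod (u n - a) + Cmod (u n - b))%R).
    - intros n. replace (a - b) with (- (u n - a) + (u n - b)) by ring.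
      eapply Rle_trans. apply Cmod_triangle. rewrite Cmod_opp. lra.
    - apply is_lim_seq_const.
    - replace (Finite 0%R) with (Finite (0 + 0)%R) by (f_equal; ring). apply is_lim_seq_plus'; auto. }
  simpl in H. assert (Cmod (a - b) = 0%R) by (pose proof (Cmod_ge_0 (a - b)); lra).
  apply Cmod_eq_0 in H0. replace a with ((a - b) + b) by ring. rewrite H0. ring.
Qed.

Lemma Cmod_le_sum x : (Cmod x <= Rabs (Re x) + Rabs (Im x))%R.
Proof.
  destruct x as [a b]. unfold Cmod; simpl.
  pose proof (Rabs_pos a); pose proof (Rabs_pos b).
  replace (a * (a * 1) + b * (b * 1))%R with (Rabs a ^ 2 + Rabs b ^ 2)%R
    by (rewrite !pow2_abs; ring).
  rewrite <- (sqrt_pow2 (Rabs a + Rabs b)) by lra.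
  apply sqrt_le_1_alt. nra.
Qed.

Lemma Clim_comp u (a b : R) : is_lim_seq (fun n => Re (u n)) a -> is_lim_seq (fun n => Im (u n)) b ->
  Clim u (a, b).
Proof.
  intros Ha Hb. apply Clim_squeeze with (b := fun n => (Rabs (Re (u n) - a) + Rabs (Im (u n) - b))%R).
  - intros n. eapply Rle_trans. apply Cmod_le_sum.
    replace (Re (u n - (a, b))) with (Re (u n) - a)%R by (destruct (u n); simpl; ring).
    replace (Im (u n - (a, b))) with (Im (u n) - b)%R by (destruct (u n); simpl; ring). lra.
  - replace 0%R with (0 + 0)%R by ring. apply is_lim_seq_plus'.
    + apply (proj1 (is_lim_seq_abs_0 _)). replace 0%R with (a - a)%R by ring. apply is_lim_seq_minus'; auto. apply is_lim_seq_const.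
    + apply (proj1 (is_lim_seq_abs_0 _)). replace 0%R with (b - b)%R by ring. apply is_lim_seq_minus'; auto. apply is_lim_seq_const.
Qed.

Open Scope C_scope.

Lemma Clim_ext u v a : Clim u a -> (forall n, u n = v n) -> Clim v a.
Proof. intros H E. unfold Clim. eapply is_lim_seq_ext; [|exact H]. intros n; simpl. rewrite E; auto. Qed.

Lemma Re_lsum_seq f M : Re (lsum (seq 0 (S M)) f) = sum_n (fun k => Re (f k)) M.
Proof.
  induction M.
  - rewrite sum_O. simpl. unfold Re, Im. simpl. ring.
  - rewrite seq_S, lsum_app, sum_Sn, <- IHM. simpl. unfold Re, Im, plus. simpl. ring.
Qed.

Lemma Im_lsum_seq f M : Im (lsum (seq 0 (S M)) f) = sum_n (fun k => Im (f k)) M.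
Proof.
  induction M.
  - rewrite sum_O. simpl. unfold Re, Im. simpl. ring.
  - rewrite seq_S, lsum_app, sum_Sn, <- IHM. simpl. unfold Re, Im, plus. simpl. ring.
Qed.

Lemma im_le_Cmod c : (Rabs (Im c) <= Cmod c)%R.
Proof.
  destruct c as [a b]. unfold Cmod; simpl.
  rewrite <- sqrt_Rsqr_abs. apply sqrt_le_1_alt. unfold Rsqr. nra.
Qed.

Lemma CSeries_Clim (r : R) f : (0 <= r < 1)%R -> (forall k, Cmod (f k) <= r ^ k)%R ->
  Clim (fun M => lsum (seq 0 (S M)) f) (CSeries f).
Proof.
  intros Hr Hf.
  assert (Hg : ex_series (fun k => r ^ k)%R).
  { exists (/ (1 - r))%R. apply is_series_geom. rewrite Rabs_right; lra. }
  assert (HR : ex_series (fun k => Re (f k))).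
  { apply (@ex_series_le R_AbsRing R_CompleteNormedModule) with (b := fun k => (r ^ k)%R); auto. intros n. change (norm (Re (f n))) with (Rabs (Re (f n))).
    eapply Rle_trans. apply re_le_Cmod. auto. }
  assert (HI : ex_series (fun k => Im (f k))).
  { apply (@ex_series_le R_AbsRing R_CompleteNormedModule) with (b := fun k => (r ^ k)%R); auto. intros n. change (norm (Im (f n))) with (Rabs (Im (f n))).
    eapply Rle_trans. apply im_le_Cmod. auto. }
  apply Series_correct in HR. apply Series_correct in HI.
  unfold CSeries. apply Clim_comp.
  - eapply is_lim_seq_ext; [|exact HR]. intros n. rewrite Re_lsum_seq. auto.
  - eapply is_lim_seq_ext; [|exact HI]. intros n. rewrite Im_lsum_seq. auto.
Qed.

Lemma sumZ_Clim (r : R) f : (0 <= r < 1)%R ->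
  (forall k, Cmod (f (Z.of_nat k)) <= r ^ k)%R ->
  (forall k, Cmod (f (- Z.of_nat (S k))%Z) <= r ^ k)%R ->
  Clim (fun M => lsum (IL M) f) (sumZ f).
Proof.
  intros Hr H1 H2. unfold sumZ.
  eapply Clim_ext. apply Clim_plus; apply CSeries_Clim with (r := r); eauto.
  intros n. unfold IL. rewrite lsum_app, !lsum_map. reflexivity.
Qed.

Definition t3 z (m : Z) := qpow z (IZR m ^ 2)%R.
Definition t4 z (m : Z) := RtoC ((-1) ^ Z.to_nat (m * m))%R * qpow z (IZR m ^ 2)%R.
Definition t2 z (m : Z) := qpow z ((IZR m + /2) ^ 2)%R.

Lemma INR_sq_ge k : (INR k <= INR k ^ 2)%R.
Proof. rewrite <- pow_INR. apply le_INR. simpl. nia. Qed.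

Lemma IZR_neg_S k : IZR (- Z.of_nat (S k)) = (- (INR k + 1))%R.
Proof. rewrite opp_IZR, <- INR_IZR_INZ, S_INR. auto. Qed.

Lemma theta3_Clim z : (0 < Im z)%R -> Clim (fun M => lsum (IL M) (t3 z)) (theta3 z).
Proof.
  intros Hz. apply sumZ_Clim with (r := rho z).
  - pose proof (rho_pos z); pose proof (rho_lt1 z Hz); lra.
  - intros k. apply qpow_bound; auto. rewrite <- INR_IZR_INZ. apply INR_sq_ge.
  - intros k. apply qpow_bound; auto. rewrite IZR_neg_S. pose proof (pos_INR k). nra.
Qed.

Lemma theta4_Clim z : (0 < Im z)%R -> Clim (fun M => lsum (IL M) (t4 z)) (theta4 z).
Proof.
  intros Hz. apply sumZ_Clim with (r := rho z).
  - pose proof (rho_pos z); pose proof (rho_lt1 z Hz); lra.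
  - intros k. unfold t4. rewrite Cmod_mult, Cmod_R, pow_1_abs, Rmult_1_l.
    apply qpow_bound; auto. rewrite <- INR_IZR_INZ. apply INR_sq_ge.
  - intros k. unfold t4. rewrite Cmod_mult, Cmod_R, pow_1_abs, Rmult_1_l.
    apply qpow_bound; auto. rewrite IZR_neg_S. pose proof (pos_INR k). nra.
Qed.

Lemma theta2_Clim z : (0 < Im z)%R -> Clim (fun M => lsum (IL M) (t2 z)) (theta2 z).
Proof.
  intros Hz. apply sumZ_Clim with (r := rho z).
  - pose proof (rho_pos z); pose proof (rho_lt1 z Hz); lra.
  - intros k. apply qpow_bound; auto. rewrite <- INR_IZR_INZ. pose proof (pos_INR k). nra.
  - intros k. apply qpow_bound; auto. rewrite IZR_neg_S. pose proof (pos_INR k). nra.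
Qed.

Open Scope C_scope.

Lemma filter_ext' {A} (f g : A -> bool) l : (forall x, f x = g x) -> filter f l = filter g l.
Proof. intros H; induction l; simpl; auto. rewrite H, IHl; auto. Qed.

Definition k3 (v : V4) : nat := Z.to_nat (nz v).
Definition k2 (v : V4) : nat := Z.to_nat (n2z v).
Definition Qn z (N : nat) : C := qpow z (INR N).
Definition P4p (t : Z -> C) (v : V4) : C := let '(a, b, c, d) := v in t a * t b * t c * t d.

Lemma lsum_pow4 l t : lsum l t * lsum l t * lsum l t * lsum l t = lsum (box4 l) (P4p t).
Proof.
  unfold box4. rewrite <- !lsum_prod.
  transitivity (lsum (list_prod (list_prod (list_prod l l) l) l)
     (fun p => (fun q => (fun r => t (fst r) * t (snd r)) (fst q) * t (snd q)) (fst p) * t (snd p))).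
  - reflexivity.
  - apply lsum_ext. intros [[[a b] c] d] _. reflexivity.
Qed.

Lemma nz_nonneg v : (0 <= nz v)%Z.
Proof. destruct v as [[[a b] c] d]. simpl.
  pose proof (Z.square_nonneg a); pose proof (Z.square_nonneg b);
  pose proof (Z.square_nonneg c); pose proof (Z.square_nonneg d). lia. Qed.
Lemma n2z_pos v : (1 <= n2z v)%Z.
Proof. destruct v as [[[a b] c] d]. simpl.
  assert (forall x, 0 <= x * (x + 1))%Z by (intros; nia).
  pose proof (H a); pose proof (H b); pose proof (H c); pose proof (H d). lia. Qed.

Lemma INR_k3 v : INR (k3 v) = IZR (nz v).
Proof. unfold k3. rewrite INR_IZR_INZ, Z2Nat.id; auto. apply nz_nonneg. Qed.
Lemma INR_k2 v : INR (k2 v) = IZR (n2z v).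
Proof. unfold k2. rewrite INR_IZR_INZ, Z2Nat.id; auto. pose proof (n2z_pos v); lia. Qed.

Lemma P4_t3 z v : P4p (t3 z) v = Qn z (k3 v).
Proof.
  destruct v as [[[a b] c] d]. unfold P4p, t3, Qn. rewrite <- !qpow_add. f_equal.
  rewrite INR_k3. simpl. rewrite !plus_IZR, !mult_IZR. ring.
Qed.

Lemma P4_t2 z v : P4p (t2 z) v = Qn z (k2 v).
Proof.
  destruct v as [[[a b] c] d]. unfold P4p, t2, Qn. rewrite <- !qpow_add. f_equal.
  rewrite INR_k2. simpl. rewrite !plus_IZR, !mult_IZR, !plus_IZR. field.
Qed.

Lemma P4_t4 z v : P4p (t4 z) v = RtoC ((-1) ^ k3 v)%R * Qn z (k3 v).
Proof.
  rewrite <- P4_t3. destruct v as [[[a b] c] d]. unfold P4p, t4, t3, k3. simpl nz.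
  pose proof (Z.square_nonneg a); pose proof (Z.square_nonneg b);
  pose proof (Z.square_nonneg c); pose proof (Z.square_nonneg d).
  rewrite !Z2Nat.inj_add by lia. rewrite !pow_add, !RtoC_mult. ring.
Qed.

Lemma odd_case (N : nat) :
  (Z.odd (Z.of_nat N) = true /\ ((-1) ^ N = -1)%R) \/ (Z.odd (Z.of_nat N) = false /\ ((-1) ^ N = 1)%R).
Proof.
  destruct (Nat.Even_or_Odd N) as [[m ->]|[m ->]].
  - right. split. rewrite Nat2Z.inj_mul. rewrite Z.odd_mul. reflexivity. apply pow_1_even.
  - left. split. rewrite Nat2Z.inj_add, Nat2Z.inj_mul. apply odd2k1.
    replace (2 * m + 1)%nat with (S (2 * m)) by lia. apply pow_1_odd.
Qed.

Lemma cnt_conv (f : V4 -> Z) (Hf : forall v, (0 <= f v)%Z) l N :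
  length (filter (fun v => Nat.eqb (Z.to_nat (f v)) N) l) = length (filter (fun v => Z.eqb (f v) (Z.of_nat N)) l).
Proof.
  f_equal. apply filter_ext'. intros v. specialize (Hf v).
  destruct (Nat.eqb_spec (Z.to_nat (f v)) N); destruct (Z.eqb_spec (f v) (Z.of_nat N)); auto; lia.
Qed.

Definition E3 z v := RtoC (1 - (-1) ^ k3 v)%R * Qn z (k3 v).
Definition E2 z v := Qn z (k2 v).

Lemma main_parts z M :
  lsum (filter (fun v => Nat.leb (k3 v) (M * M)) (box4 (IL M))) (E3 z) =
  lsum (filter (fun v => Nat.leb (k2 v) (M * M)) (box4 (IL M))) (E2 z).
Proof.
  unfold E3, E2.
  rewrite (lsum_group _ k3 (M * M) (fun N => RtoC (1 - (-1) ^ N)%R * Qn z N)).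
  rewrite (lsum_group _ k2 (M * M) (fun N => Qn z N)).
  apply lsum_ext. intros N HN. apply in_seq in HN.
  unfold k3, k2. rewrite cnt_conv by apply nz_nonneg.
  rewrite (cnt_conv n2z) by (intros v; pose proof (n2z_pos v); lia).
  destruct (odd_case N) as [[Ho Hp]|[Ho Hp]]; rewrite Hp.
  - rewrite count_main by (auto; lia). rewrite mult_INR.
    unfold RtoC. apply injective_projections; simpl; ring.
  - rewrite count_even by auto. simpl.
    unfold RtoC. apply injective_projections; simpl; ring.
Qed.

Lemma tail_bound {A} (l : list A) (k : A -> nat) (G : nat -> C) K B :
  (forall N, (K < N)%nat -> Cmod (G N) <= B)%R -> (0 <= B)%R ->
  (Cmod (lsum (filter (fun v => negb (Nat.leb (k v) K)) l) (fun v => G (k v))) <= INR (length l) * B)%R.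
Proof.
  intros H HB. eapply Rle_trans. apply lsum_bound.
  - intros x Hx. apply filter_In in Hx as [_ Hx]. apply H.
    destruct (Nat.leb_spec (k x) K); simpl in Hx; [discriminate|lia].
  - apply Rmult_le_compat_r; auto. apply le_INR. apply filter_length_le.
Qed.

Lemma Dbound z M : (0 < Im z)%R ->
  (Cmod (lsum (box4 (IL M)) (E3 z) - lsum (box4 (IL M)) (E2 z)) <=
   3 * INR (length (box4 (IL M))) * rho z ^ (M * M))%R.
Proof.
  intros Hz.
  rewrite (lsum_filter _ (fun v => Nat.leb (k3 v) (M * M))).
  rewrite (lsum_filter (box4 (IL M)) (fun v => Nat.leb (k2 v) (M * M))).
  rewrite main_parts.
  match goal with |- (Cmod (?a + ?b - (?a + ?c)) <= _)%R =>
    replace (a + b - (a + c)) with (b + - c) by ring end.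
  eapply Rle_trans. apply Cmod_triangle. rewrite Cmod_opp.
  pose proof (rho_pos z). assert (0 <= rho z ^ (M * M))%R by (apply pow_le; lra).
  assert (T3 : (Cmod (lsum (filter (fun v => negb (Nat.leb (k3 v) (M * M))) (box4 (IL M))) (E3 z))
            <= INR (length (box4 (IL M))) * (2 * rho z ^ (M * M)))%R).
  { apply (tail_bound _ k3 (fun N => RtoC (1 - (-1) ^ N)%R * Qn z N)); [|lra].
    intros N HN. rewrite Cmod_mult, Cmod_R. apply Rmult_le_compat.
    - apply Rabs_pos.
    - apply Cmod_ge_0.
    - eapply Rle_trans. apply Rabs_triang_inv2 || apply Rabs_triang. rewrite Rabs_Ropp, pow_1_abs, Rabs_R1. lra.
    - apply qpow_bound; auto. apply le_INR. lia. }
  assert (T2 : (Cmod (lsum (filter (fun v => negb (Nat.leb (k2 v) (M * M))) (box4 (IL M))) (E2 z))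
            <= INR (length (box4 (IL M))) * (rho z ^ (M * M)))%R).
  { apply (tail_bound _ k2 (fun N => Qn z N)); [|lra].
    intros N HN. apply qpow_bound; auto. apply le_INR. lia. }
  pose proof (pos_INR (length (box4 (IL M)))). nra.
Qed.

Open Scope C_scope.

Lemma length_IL M : length (IL M) = (2 * S M)%nat.
Proof. unfold IL. rewrite length_app, !length_map, length_seq. lia. Qed.

Lemma length_box M : INR (length (box4 (IL M))) = ((2 * (INR M + 1)) ^ 4)%R.
Proof.
  unfold box4, V4. rewrite !length_prod, length_IL, !mult_INR, !S_INR. simpl. ring.
Qed.

Lemma pow2_ge M : (INR M + 1 <= 2 ^ M)%R.
Proof.
  induction M. simpl. lra.
  rewrite S_INR. simpl. assert (1 <= 2 ^ M)%R by (apply pow_R1_Rle; lra). lra.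
Qed.

Lemma bseq_lim z : (0 < Im z)%R ->
  is_lim_seq (fun M => 3 * INR (length (box4 (IL M))) * rho z ^ (M * M))%R 0%R.
Proof.
  intros Hz. pose proof (rho_pos z) as Hr0. pose proof (rho_lt1 z Hz) as Hr1.
  assert (Hg := is_lim_seq_geom (rho z)). rewrite Rabs_right in Hg by lra.
  specialize (Hg Hr1). apply is_lim_seq_spec in Hg.
  destruct (Hg (mkposreal (/32) ltac:(lra))) as [N HN]. simpl in HN.
  apply is_lim_seq_le_le_loc with (u := fun _ => 0%R) (w := fun M => (48 * (/2) ^ M)%R).
  - exists N. intros M HM. specialize (HN M HM). rewrite Rminus_0_r, Rabs_right in HN by (apply Rle_ge, pow_le; lra).
    assert (H0 : (0 <= rho z ^ (M * M))%R) by (apply pow_le; lra).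
    split. pose proof (pos_INR (length (box4 (IL M)))). nra.
    rewrite length_box, pow_mult.
    pose proof (pow2_ge M). pose proof (pos_INR M).
    assert (HA : ((2 * (INR M + 1)) ^ 4 <= 16 * 16 ^ M)%R).
    { replace (16 ^ M)%R with ((2 ^ M) ^ 4)%R by (rewrite <- pow_mult, Nat.mul_comm, pow_mult; simpl; f_equal; ring).
      replace (16 * (2 ^ M) ^ 4)%R with ((2 * 2 ^ M) ^ 4)%R by ring.
      apply pow_incr. lra. }
    assert (HB : ((rho z ^ M) ^ M * 16 ^ M <= (/2) ^ M)%R).
    { rewrite <- Rpow_mult_distr. apply pow_incr. split. apply Rmult_le_pos; [apply pow_le|]; lra. lra. }
    assert (0 <= (rho z ^ M) ^ M)%R by (apply pow_le, pow_le; lra).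
    assert (0 <= 16 ^ M)%R by (apply pow_le; lra).
    nra.
  - apply is_lim_seq_const.
  - replace (Finite 0%R) with (Rbar_mult (Finite 48%R) (Finite 0%R)) by (simpl; f_equal; ring).
    apply is_lim_seq_scal_l. apply is_lim_seq_geom. rewrite Rabs_right; lra.
Qed.

Definition x4 (a : C) := a * a * a * a.

Lemma Clim_x4 u a : Clim u a -> Clim (fun n => x4 (u n)) (x4 a).
Proof. intros H. unfold x4. repeat apply Clim_mult; auto. Qed.

Lemma Clim_minus u v a b : Clim u a -> Clim v b -> Clim (fun n => u n - v n) (a - b).
Proof. intros; apply Clim_plus; auto. apply Clim_opp; auto. Qed.

Lemma lsum_minus {A} (l : list A) f g : lsum l (fun x => f x - g x) = lsum l f - lsum l g.
Proof. unfold Cminus. rewrite lsum_plus, lsum_opp. auto. Qed.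

Lemma Jacobi z : (0 < Im z)%R -> x4 (theta3 z) = x4 (theta2 z) + x4 (theta4 z).
Proof.
  intros Hz.
  set (D := fun M => x4 (lsum (IL M) (t3 z)) - x4 (lsum (IL M) (t4 z)) - x4 (lsum (IL M) (t2 z))).
  assert (H1 : Clim D (x4 (theta3 z) - x4 (theta4 z) - x4 (theta2 z))).
  { unfold D. repeat apply Clim_minus; apply Clim_x4;
      [apply theta3_Clim|apply theta4_Clim|apply theta2_Clim]; auto. }
  assert (H2 : Clim D (RtoC 0%R)).
  { apply Clim_squeeze with (b := fun M => (3 * INR (length (box4 (IL M))) * rho z ^ (M * M))%R);
      [|apply bseq_lim; auto].
    intros M. replace (D M - RtoC 0%R) with (D M) by ring. unfold D, x4. rewrite !lsum_pow4.
    replace (lsum (box4 (IL M)) (P4p (t3 z)) - lsum (box4 (IL M)) (P4p (t4 z)))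
      with (lsum (box4 (IL M)) (E3 z)).
    replace (lsum (box4 (IL M)) (P4p (t2 z))) with (lsum (box4 (IL M)) (E2 z)).
    apply Dbound; auto.
    - apply lsum_ext. intros v _. rewrite P4_t2. reflexivity.
    - rewrite <- lsum_minus. apply lsum_ext. intros v _. rewrite P4_t3, P4_t4. unfold E3.
      rewrite RtoC_minus. ring. }
  pose proof (Clim_unique _ _ _ H1 H2).
  replace (x4 (theta3 z)) with ((x4 (theta3 z) - x4 (theta4 z) - x4 (theta2 z)) + x4 (theta2 z) + x4 (theta4 z)) by ring.
  rewrite H. ring.
Qed.

Open Scope R_scope.

Definition T (n i : nat) : R :=
  if Nat.eqb i 0 then 2 else
  if Nat.leb (3 * i) n then INR n / INR i * Binomial.C (n - i - 1) (2 * i - 1) else 0.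

Lemma T0 m : T m 0 = 2.
Proof. reflexivity. Qed.

Lemma T_zero i m : (1 <= i)%nat -> (m < 3 * i)%nat -> T m i = 0.
Proof.
  intros H1 H2. unfold T. destruct (Nat.eqb_spec i 0); [lia|].
  destruct (Nat.leb_spec (3 * i) m); [lia|]. auto.
Qed.

Lemma T_eval s j m : m = (3 * s + 3 + j)%nat ->
  T m (S s) = INR m / INR (S s) * INR (fact (2 * s + 1 + j)) / (INR (fact (2 * s + 1)) * INR (fact j)).
Proof.
  intros Hm. unfold T. simpl (Nat.eqb (S s) 0).
  destruct (Nat.leb_spec (3 * S s) m); [|lia].
  unfold Binomial.C.
  replace (m - S s - 1)%nat with (2 * s + 1 + j)%nat by lia.
  replace (2 * S s - 1)%nat with (2 * s + 1)%nat by lia.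
  replace (2 * s + 1 + j - (2 * s + 1))%nat with j by lia.
  field. repeat split; (apply INR_fact_neq_0 || (apply not_0_INR; lia)).
Qed.

Lemma fact1 b : INR (fact (b + 1)) = (INR b + 1) * INR (fact b).
Proof. rewrite Nat.add_1_r, fact_simpl, mult_INR, S_INR. ring. Qed.
Lemma fact2 b : INR (fact (b + 2)) = (INR b + 2) * (INR b + 1) * INR (fact b).
Proof. replace (b + 2)%nat with ((b + 1) + 1)%nat by lia. rewrite !fact1, plus_INR. simpl. ring. Qed.
Lemma fact3 b : INR (fact (b + 3)) = (INR b + 3) * (INR b + 2) * (INR b + 1) * INR (fact b).
Proof. replace (b + 3)%nat with ((b + 2) + 1)%nat by lia. rewrite fact1, fact2, plus_INR. simpl. ring. Qed.

Ltac fpos := repeat match goal with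
  | |- context [INR (fact ?b)] =>
      let H := fresh in assert (H : 0 < INR (fact b)) by (apply lt_0_INR, lt_O_fact);
      let x := fresh "F" in set (x := INR (fact b)) in *
  end.

Ltac fin := rewrite ?plus_INR, ?mult_INR, ?S_INR; fpos; simpl INR;
  field; repeat split; apply Rgt_not_eq.

Lemma T_rec n i : (1 <= n)%nat -> (1 <= i)%nat ->
  T (n + 3) i = 2 * T (n + 2) i - T (n + 1) i + T n (i - 1).
Proof.
  intros Hn Hi. destruct i as [|s]; [lia|]. replace (S s - 1)%nat with s by lia.
  destruct (lt_dec n (3 * s)) as [Hf|Hf].
  { rewrite !T_zero by lia. ring. }
  destruct (Nat.eq_dec n (3 * s)) as [He|He].
  { rewrite (T_eval s 0 (n + 3)) by lia. rewrite !T_zero by lia.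
    destruct s as [|s']; [lia|].
    rewrite (T_eval s' 0 n) by lia.
    replace (2 * S s' + 1 + 0)%nat with (2 * S s' + 1)%nat by lia.
    replace (2 * s' + 1 + 0)%nat with (2 * s' + 1)%nat by lia.
    change (fact 0) with 1%nat. subst n. fin.
    all: pose proof (pos_INR s'); nra. }
  destruct (Nat.eq_dec n (3 * s + 1)) as [Hd|Hd].
  { rewrite (T_eval s 1 (n + 3)), (T_eval s 0 (n + 2)) by lia. rewrite (T_zero _ (n + 1)) by lia.
    destruct s as [|s'].
    - subst n. rewrite T0. simpl. field.
    - rewrite (T_eval s' 1 n) by lia.
      replace (2 * S s' + 1 + 1)%nat with ((2 * s' + 1) + 3)%nat by lia. rewrite (fact3 (2 * s' + 1)).
      replace (2 * S s' + 1 + 0)%nat with ((2 * s' + 1) + 2)%nat by lia.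
      replace (2 * S s' + 1)%nat with ((2 * s' + 1) + 2)%nat by lia. rewrite (fact2 (2 * s' + 1)).
      replace (2 * s' + 1 + 1)%nat with ((2 * s' + 1) + 1)%nat by lia. rewrite (fact1 (2 * s' + 1)).
      change (fact 0) with 1%nat. change (fact 1) with 1%nat.
      subst n. fin.
      all: pose proof (pos_INR s'); nra. }
  destruct (Nat.eq_dec n (3 * s + 2)) as [Hc|Hc].
  { rewrite (T_eval s 2 (n + 3)), (T_eval s 1 (n + 2)), (T_eval s 0 (n + 1)) by lia.
    destruct s as [|s'].
    - subst n. rewrite T0. simpl. field.
    - rewrite (T_eval s' 2 n) by lia.
      replace (2 * S s' + 1 + 2)%nat with ((2 * s' + 1) + 4)%nat by lia.
      replace ((2 * s' + 1) + 4)%nat with (((2 * s' + 1) + 1) + 3)%nat by lia.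
      rewrite (fact3 (2 * s' + 1 + 1)), (fact1 (2 * s' + 1)).
      replace (2 * S s' + 1 + 1)%nat with ((2 * s' + 1) + 3)%nat by lia. rewrite (fact3 (2 * s' + 1)).
      replace (2 * S s' + 1 + 0)%nat with ((2 * s' + 1) + 2)%nat by lia.
      replace (2 * S s' + 1)%nat with ((2 * s' + 1) + 2)%nat by lia. rewrite (fact2 (2 * s' + 1)).
      change (fact 0) with 1%nat. change (fact 1) with 1%nat. change (fact 2) with 2%nat.
      subst n. fin.
      all: pose proof (pos_INR s'); nra. }
  assert (Hj : exists j, n = (3 * s + 3 + j)%nat) by (exists (n - (3 * s + 3))%nat; lia).
  destruct Hj as [j Hj].
  rewrite (T_eval s (j + 3) (n + 3)), (T_eval s (j + 2) (n + 2)), (T_eval s (j + 1) (n + 1)) by lia.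
  rewrite (fact3 j), (fact2 j), (fact1 j).
  destruct s as [|s'].
  - subst n. rewrite T0.
    replace (2 * 0 + 1 + (j + 3))%nat with (j + 4)%nat by lia.
    replace (2 * 0 + 1 + (j + 2))%nat with (j + 3)%nat by lia.
    replace (2 * 0 + 1 + (j + 1))%nat with (j + 2)%nat by lia.
    replace (j + 4)%nat with ((j + 1) + 3)%nat by lia.
    rewrite (fact3 (j + 1)), (fact2 j).
    replace (j + 3)%nat with ((j + 1) + 2)%nat by lia. rewrite (fact2 (j + 1)).
    replace (j + 1 + 2)%nat with (j + 3)%nat by lia.
    change (fact (2 * 0 + 1)) with 1%nat.
    rewrite (fact1 j). fin. all: pose proof (pos_INR j); nra.
  - rewrite (T_eval s' (j + 3) n) by lia. rewrite (fact3 j).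
    set (b := (2 * S s' + 1 + j)%nat).
    replace (2 * S s' + 1 + (j + 3))%nat with (b + 3)%nat by (unfold b; lia).
    replace (2 * S s' + 1 + (j + 2))%nat with (b + 2)%nat by (unfold b; lia).
    replace (2 * S s' + 1 + (j + 1))%nat with (b + 1)%nat by (unfold b; lia).
    replace (2 * s' + 1 + (j + 3))%nat with (b + 1)%nat by (unfold b; lia).
    rewrite (fact3 b), (fact2 b), (fact1 b).
    replace (2 * S s' + 1)%nat with ((2 * s' + 1) + 2)%nat by lia. rewrite (fact2 (2 * s' + 1)).
    subst n. unfold b. fin.
    all: pose proof (pos_INR s'); pose proof (pos_INR j); nra.
Qed.

Open Scope C_scope.

Definition cpw (x : C) (n : nat) : C := pow_n x n.

Lemma cpw_S (x : C) n : cpw x (S n) = x * cpw x n.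
Proof. reflexivity. Qed.
Lemma cpw_O (x : C) : cpw x 0 = RtoC 1.
Proof. reflexivity. Qed.
Lemma cpw_plus (x : C) m n : cpw x (m + n) = cpw x m * cpw x n.
Proof. induction m; cbn [Nat.add]. rewrite cpw_O. ring. rewrite !cpw_S, IHm. ring. Qed.
Lemma cpw_mult (x : C) m n : cpw x (m * n) = cpw (cpw x m) n.
Proof.
  induction n. rewrite Nat.mul_0_r. reflexivity.
  rewrite Nat.mul_succ_r, Nat.add_comm, cpw_plus, IHn, cpw_S. ring.
Qed.
Lemma cpw_Cmult (x y : C) n : cpw (x * y) n = cpw x n * cpw y n.
Proof. induction n. rewrite !cpw_O. ring. rewrite !cpw_S, IHn. ring. Qed.
Lemma RtoC_pow (x : R) n : RtoC (x ^ n) = cpw (RtoC x) n.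
Proof. induction n. reflexivity. rewrite cpw_S, <- IHn. simpl. rewrite RtoC_mult. auto. Qed.

Lemma lsum_minus2 {A} (l : list A) f g : lsum l (fun x => f x - g x) = lsum l f - lsum l g.
Proof. unfold Cminus. rewrite lsum_plus, lsum_opp. auto. Qed.

Section Alg.
Variables D E : C.

Definition term (m i : nat) : C := RtoC (T m i) * cpw D i * cpw E (m - 3 * i).
Definition Fs (m : nat) : C := lsum (seq 0 (S m)) (term m).

Lemma term_zero m i : (1 <= i)%nat -> (m < 3 * i)%nat -> term m i = 0.
Proof. intros. unfold term. rewrite T_zero by auto. ring. Qed.



Lemma F_ext m N : (m <= N)%nat -> lsum (seq 0 (S N)) (term m) = Fs m.
Proof.
  intros H. unfold Fs. replace (S N) with (S m + (N - m))%nat by lia.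
  rewrite seq_app, lsum_app.
  rewrite (lsum_ext (seq (0 + S m) (N - m)) (term m) (fun _ => 0)).
  - rewrite (lsum_zero _ (fun _ : nat => RtoC 0)) by auto. ring.
  - intros i Hi. apply in_seq in Hi. apply term_zero; lia.
Qed.

Lemma shiftE m k i : (1 <= i)%nat ->
  cpw E k * term m i = RtoC (T m i) * cpw D i * cpw E (m + k - 3 * i).
Proof.
  intros Hi. unfold term. destruct (le_lt_dec (3 * i) m) as [Hl|Hl].
  - replace (m + k - 3 * i)%nat with (k + (m - 3 * i))%nat by lia. rewrite cpw_plus. ring.
  - rewrite T_zero by auto. ring.
Qed.

Lemma shiftD n s : (1 <= n)%nat ->
  D * term n s = RtoC (T n s) * cpw D (S s) * cpw E (n + 3 - 3 * S s).
Proof.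
  intros Hn. unfold term. rewrite cpw_S. destruct s as [|s].
  - replace (n + 3 - 3 * 1)%nat with (n - 3 * 0)%nat by lia. ring.
  - destruct (le_lt_dec (3 * S s) n) as [Hl|Hl].
    + replace (n + 3 - 3 * S (S s))%nat with (n - 3 * S s)%nat by lia. ring.
    + rewrite T_zero by lia. ring.
Qed.

Lemma term_rec n i : (1 <= n)%nat ->
  term (n + 3) i = RtoC 2 * E * term (n + 2) i - E * E * term (n + 1) i +
     match i with 0 => 0 | S s => D * term n s end.
Proof.
  intros Hn. destruct i as [|s].
  - unfold term. rewrite !T0. replace (n + 3 - 3 * 0)%nat with (S (S (n + 1))) by lia.
    replace (n + 2 - 3 * 0)%nat with (S (n + 1)) by lia. replace (n + 1 - 3 * 0)%nat with (n + 1)%nat by lia.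
    rewrite !cpw_S. ring.
  - rewrite shiftD by auto.
    assert (H1 := shiftE (n + 2) 1 (S s) ltac:(lia)).
    assert (H2 := shiftE (n + 1) 2 (S s) ltac:(lia)).
    rewrite cpw_S, cpw_O in H1. rewrite !cpw_S, cpw_O in H2.
    replace (RtoC 2 * E * term (n + 2) (S s)) with (RtoC 2 * (E * 1 * term (n + 2) (S s))) by ring.
    replace (E * E * term (n + 1) (S s)) with (E * (E * 1) * term (n + 1) (S s)) by ring.
    rewrite H1, H2.
    replace (n + 2 + 1)%nat with (n + 3)%nat by lia. replace (n + 1 + 2)%nat with (n + 3)%nat by lia.
    unfold term. rewrite (T_rec n (S s)) by lia. replace (S s - 1)%nat with s by lia.
    rewrite RtoC_plus, RtoC_minus, RtoC_mult, !cpw_S. ring.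
Qed.

Lemma sh_sum n : lsum (seq 0 (S (n + 3)))
   (fun i => match i with 0%nat => 0 | S s => D * term n s end) = D * Fs n.
Proof.
  change (seq 0 (S (n + 3))) with (0%nat :: seq 1 (n + 3)).
  rewrite lsum_cons. rewrite <- seq_shift, lsum_map.
  rewrite lsum_scal. replace (n + 3)%nat with (S (n + 2)) by lia.
  rewrite (F_ext n (n + 2)) by lia. ring.
Qed.

Lemma F_rec n : (1 <= n)%nat ->
  Fs (n + 3) = RtoC 2 * E * Fs (n + 2) - E * E * Fs (n + 1) + D * Fs n.
Proof.
  intros Hn.
  rewrite <- (F_ext (n + 2) (n + 3)), <- (F_ext (n + 1) (n + 3)) by lia.
  unfold Fs at 1.
  rewrite (lsum_ext _ _ (fun i => RtoC 2 * E * term (n + 2) i - E * E * term (n + 1) i +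
     match i with 0 => 0 | S s => D * term n s end)) by (intros; apply term_rec; auto).
  rewrite lsum_plus, lsum_minus2, !lsum_scal.
  rewrite sh_sum. ring.
Qed.
End Alg.

Open Scope C_scope.

Lemma cpw8 (x : C) : cpw x 8 = x4 x * x4 x.
Proof. unfold x4. rewrite !cpw_S, cpw_O. ring. Qed.

Lemma plus_C (x y : C) : @eq C (plus x y) (x + y).
Proof. reflexivity. Qed.

Lemma sum_n_m_lsum (f : nat -> C) a k : @eq C (sum_n_m f a (a + k)) (lsum (seq a (S k)) f).
Proof.
  induction k.
  - rewrite Nat.add_0_r, sum_n_n. simpl. ring.
  - replace (a + S k)%nat with (S (a + k)) by lia. rewrite sum_n_Sm by lia.
    rewrite plus_C, IHk, (seq_S (S k) a), lsum_app, lsum_cons.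
    change (lsum [] f) with (RtoC 0). replace (a + S k)%nat with (S (a + k)) by lia. ring.
Qed.

Section Main.
Variable z : C.
Hypothesis hz : (0 < Im z)%R.

Let A := x4 (theta2 z).
Let B := x4 (theta4 z).
Let a := A * A.
Let b := (A + B) * (A + B).
Let c := B * B.
Let Ee := A * A + A * B + B * B.
Let Dd := a * b * c.

Definition pp (m : nat) : C := cpw a m + cpw b m + cpw c m.

Lemma root_eq x : x = a \/ x = b \/ x = c -> x * x * x = RtoC 2 * Ee * (x * x) - Ee * Ee * x + Dd.
Proof. intros [->|[->| ->]]; unfold Dd, Ee, a, b, c; ring. Qed.

Lemma cpw_rec x n : x * x * x = RtoC 2 * Ee * (x * x) - Ee * Ee * x + Dd ->
  cpw x (n + 3) = RtoC 2 * Ee * cpw x (n + 2) - Ee * Ee * cpw x (n + 1) + Dd * cpw x n.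
Proof.
  intros H. rewrite !cpw_plus, !cpw_S, !cpw_O.
  transitivity (cpw x n * (x * x * x)); [ring|]. rewrite H. ring.
Qed.

Lemma pp_rec n : pp (n + 3) = RtoC 2 * Ee * pp (n + 2) - Ee * Ee * pp (n + 1) + Dd * pp n.
Proof.
  unfold pp. rewrite !(cpw_rec a), !(cpw_rec b), !(cpw_rec c) by (apply root_eq; auto). ring.
Qed.

Lemma T11 : T 1 1 = 0%R. Proof. apply T_zero; lia. Qed.
Lemma T21 : T 2 1 = 0%R. Proof. apply T_zero; lia. Qed.
Lemma T31 : T 3 1 = 3%R.
Proof. rewrite (T_eval 0 0 3) by lia. simpl. field. Qed.

Lemma base1 : pp 1 = Fs Dd Ee 1.
Proof.
  unfold pp, Fs. simpl seq. rewrite !lsum_cons. unfold term. cbn [Nat.sub Nat.mul Nat.add].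
  rewrite T0, T11. rewrite !cpw_S, !cpw_O. change (lsum [] _) with (RtoC 0).
  unfold Ee, a, b, c. ring.
Qed.

Lemma base2 : pp 2 = Fs Dd Ee 2.
Proof.
  unfold pp, Fs. simpl seq. rewrite !lsum_cons. unfold term. cbn [Nat.sub Nat.mul Nat.add].
  rewrite T0, T21, (T_zero 2 2) by lia. rewrite !cpw_S, !cpw_O. change (lsum [] _) with (RtoC 0).
  unfold Ee, a, b, c. ring.
Qed.

Lemma base3 : pp 3 = Fs Dd Ee 3.
Proof.
  unfold pp, Fs. simpl seq. rewrite !lsum_cons. unfold term. cbn [Nat.sub Nat.mul Nat.add].
  rewrite T0, T31, (T_zero 2 3), (T_zero 3 3) by lia. rewrite !cpw_S, !cpw_O. change (lsum [] _) with (RtoC 0).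
  unfold Dd, Ee, a, b, c. ring.
Qed.

Lemma pp_F n : (1 <= n)%nat -> pp n = Fs Dd Ee n.
Proof.
  intros Hn.
  assert (H : forall k, pp (k + 1) = Fs Dd Ee (k + 1) /\ pp (k + 2) = Fs Dd Ee (k + 2) /\ pp (k + 3) = Fs Dd Ee (k + 3)).
  { induction k as [|k [H1 [H2 H3]]].
    - simpl. split; [apply base1|split; [apply base2|apply base3]].
    - replace (S k + 1)%nat with (k + 2)%nat by lia. replace (S k + 2)%nat with (k + 3)%nat by lia.
      split; auto. split; auto.
      replace (S k + 3)%nat with ((k + 1) + 3)%nat by lia.
      rewrite pp_rec, F_rec by lia.
      replace (k + 1 + 2)%nat with (k + 3)%nat by lia. replace (k + 1 + 1)%nat with (k + 2)%nat by lia.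
      rewrite H1, H2, H3. reflexivity. }
  destruct (H (n - 1)%nat) as [H1 _]. replace (n - 1 + 1)%nat with n in H1 by lia. auto.
Qed.

End Main.

Open Scope C_scope.

Lemma Fs_split D E n : Fs D E n = RtoC 2 * cpw E n + lsum (seq 1 (n / 3)) (term D E n).
Proof.
  unfold Fs. change (seq 0 (S n)) with (0%nat :: seq 1 n). rewrite lsum_cons.
  unfold term at 1. rewrite T0, cpw_O. replace (n - 3 * 0)%nat with n by lia.
  pose proof (Nat.div_mod_eq n 3). pose proof (Nat.mod_upper_bound n 3 ltac:(lia)).
  set (q := (n / 3)%nat) in *. set (r := (n mod 3)%nat) in *.
  replace (seq 1 n) with (seq 1 (q + (n - q))) by (f_equal; lia).
  rewrite seq_app, lsum_app.
  rewrite (lsum_ext (seq (1 + q) (n - q)) (term D E n) (fun _ => RtoC 0)).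
  - rewrite (lsum_zero _ (fun _ : nat => RtoC 0)) by auto. ring.
  - intros i Hi. apply in_seq in Hi. apply term_zero; lia.
Qed.

Lemma cpw2_8 : cpw (RtoC 2) 8 = RtoC 256.
Proof. rewrite !cpw_S, cpw_O. rewrite <- !RtoC_mult. f_equal. ring. Qed.

Theorem theorem2p2 (z : C) (hz : (0 < Im z)%R) (n : nat) (hn : (0 < n)%nat) :
  h n z =
  RtoC 2 * pow_n (E4 z) n
  + sum_n_m (fun i : nat =>
      RtoC (INR n / INR i * Binomial.C (n - i - 1) (2 * i - 1) * 2 ^ (8 * i))%R
      * pow_n (Delta24 z) i * pow_n (E4 z) (n - 3 * i))
      1 (n / 3).
Proof.
  pose proof (Jacobi z hz) as J.
  assert (Hh : h n z = pp z n).
  { unfold h, pp. change (@pow_n C_Ring) with cpw. rewrite !cpw_mult, !cpw8, J. reflexivity. }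
  assert (HE : E4 z = x4 (theta2 z) * x4 (theta2 z) + x4 (theta2 z) * x4 (theta4 z) + x4 (theta4 z) * x4 (theta4 z)).
  { unfold E4. change (@pow_n C_Ring) with cpw. rewrite !cpw8, J.
    set (A := x4 (theta2 z)). set (B := x4 (theta4 z)).
    transitivity (RtoC (/ 2 * 2) * (A * A + A * B + B * B)).
    - rewrite RtoC_mult. ring.
    - rewrite Rinv_l by lra. ring. }
  assert (HD : x4 (theta2 z) * x4 (theta2 z) * ((x4 (theta2 z) + x4 (theta4 z)) * (x4 (theta2 z) + x4 (theta4 z))) * (x4 (theta4 z) * x4 (theta4 z))
               = RtoC 256 * Delta24 z).
  { unfold Delta24. change (@pow_n C_Ring) with cpw. unfold Cdiv.
    rewrite !cpw_Cmult, !cpw8, J. rewrite <- RtoC_inv by lra.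
    assert (H2 : x4 (RtoC (/ 2)) * x4 (RtoC (/ 2)) * RtoC 256 = RtoC 1).
    { unfold x4. rewrite <- !RtoC_mult. f_equal. field. }
    set (A := x4 (theta2 z)). set (B := x4 (theta4 z)).
    match goal with |- ?L = _ => transitivity (L * (x4 (RtoC (/ 2)) * x4 (RtoC (/ 2)) * RtoC 256)) end.
    - rewrite H2. ring.
    - ring. }
  rewrite Hh, pp_F by auto.
  change (@pow_n C_Ring) with cpw.
  rewrite HE, HD. rewrite Fs_split. f_equal.
  set (Ee := x4 (theta2 z) * x4 (theta2 z) + x4 (theta2 z) * x4 (theta4 z) + x4 (theta4 z) * x4 (theta4 z)).
  set (Dl := Delta24 z).
  pose proof (Nat.div_mod_eq n 3). pose proof (Nat.mod_upper_bound n 3 ltac:(lia)).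
  destruct (n / 3)%nat as [|k] eqn:Hq.
  - rewrite sum_n_m_zero by lia. reflexivity.
  - replace (S k) with (1 + k)%nat by lia. rewrite sum_n_m_lsum. replace (1 + k)%nat with (S k) by lia.
    apply lsum_ext. intros i Hi. apply in_seq in Hi.
    unfold term. unfold T.
    destruct (Nat.eqb_spec i 0); [lia|]. destruct (Nat.leb_spec (3 * i) n); [|lia].
    rewrite cpw_Cmult, !RtoC_mult, RtoC_pow, cpw_mult, cpw2_8. ring.
Qed.
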